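(* Let $V\ge0$ be locally integrable on $\mathbb H^n$, $V\not\equiv0$, with $V\in RH_s$ for some $s\ge Q/2$, and let $0<\alpha<Q$. Let $\delta\in(0,1]$ be the Lipschitz exponent of the heat kernel described in the context. For every $N\in\mathbb N$ there is $C_{N,\alpha}>0$ such that for all $u,v,w\in\mathbb H^n$ with $|v^{-1}u|\le|w^{-1}u|/2$, $$|\mathcal K_\alpha(u,w)-\mathcal K_\alpha(v,w)|\le C_{N,\alpha}\Big[1+\frac{|w^{-1}u|}{\rho(u)}\Big]^{-N}\frac{|v^{-1}u|^{\delta}}{|w^{-1}u|^{Q-\alpha+\delta}}.$$
   Context: The Heisenberg group $\mathbb H^n$ is $\mathbb C^n\times\mathbb R$ with multiplication $(z,t)\cdot(z',t')=(z+z',t+t'+2\,\mathrm{Im}(z\cdot\overline{z'}))$, $z\cdot\overline{z'}=\sum_j z_j\overline{z_j'}$; inverse $(z,t)^{-1}=(-z,-t)$. Homogeneous norm $|(z,t)|=(|z|^4+t^2)^{1/4}$, balls $B(u,r)=\{v:|u^{-1}v|<r\}$, $Q=2n+2$. With $z_j=x_j+iy_j$, $X_j=\partial_{x_j}+2y_j\partial_t$, $Y_j=\partial_{y_j}-2x_j\partial_t$, $\Delta_{\mathbb H^n}=\sum_j(X_j^2+Y_j^2)$. $V\in RH_s$ means $\big(\frac1{|B|}\int_B V^s\big)^{1/s}\le C\frac1{|B|}\int_B V$ for all balls. Critical radius: $\rho(u)=\sup\{r>0: r^{2-Q}\int_{B(u,r)}V\le 1\}\in(0,\infty)$. $\mathcal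 L=-\Delta_{\mathbb H^n}+V$, $P_s(u,v)$ is the kernel of $e^{-s\mathcal L}$, and $\mathcal K_\alpha(u,v)=\frac1{\Gamma(\alpha/2)}\int_0^\infty P_s(u,v)s^{\alpha/2-1}ds$. The exponent $\delta$: a fixed $\delta\in(0,1]$ (which exists under these hypotheses) such that for every $N\in\mathbb N$ there is $C_N>0$ with $|P_s(u\cdot h,v)-P_s(u,v)|\le C_N(|h|/\sqrt s)^{\delta}s^{-Q/2}\exp(-|v^{-1}u|^2/(As))[1+\sqrt s/\rho(u)+\sqrt s/\rho(v)]^{-N}$ for all $s>0$, $u,v\in\mathbb H^n$, $|h|\le|v^{-1}u|/2$, with $A>0$ a fixed constant. *)

(* Defs.v *)
From HB Require Import structures.
From mathcomp Require Import all_boot all_order all_algebra.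
From mathcomp Require Import all_classical all_reals all_analysis.
Set Implicit Arguments. Unset Strict Implicit. Unset Printing Implicit Defensive.
Import Order.TTheory GRing.Theory Num.Theory.
Import numFieldNormedType.Exports.
Local Open Scope classical_set_scope.
Local Open Scope ring_scope.

Section Heisenberg.
Variable R : realType.
Variable n : nat.

(* A point (x, y, t) of H^n, with z_j = x_j + i y_j. *)
Definition Hn := ('rV[R]_n * 'rV[R]_n * R)%type.

Definition hx (u : Hn) : 'rV[R]_n := u.1.1.
Definition hy (u : Hn) : 'rV[R]_n := u.1.2.
Definition ht (u : Hn) : R := u.2.

(* (z,t).(z',t') = (z+z', t+t'+2 Im(z . conj z')),
   Im(z_j conj z'_j) = y_j x'_j - x_j y'_j *)
Definition hmul (u v : Hn) : Hn :=
  (hx u + hx v, hy u + hy v,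
   ht u + ht v + 2 * \sum_(j < n) (hy u 0 j * hx v 0 j - hx u 0 j * hy v 0 j)).

Definition hinv (u : Hn) : Hn := (- hx u, - hy u, - ht u).

Definition zsq (u : Hn) : R := \sum_(j < n) (hx u 0 j ^+ 2 + hy u 0 j ^+ 2).

Definition hnorm (u : Hn) : R := Num.sqrt (Num.sqrt (zsq u ^+ 2 + ht u ^+ 2)).

Definition hball (u : Hn) (r : R) : set Hn := [set v | hnorm (hmul (hinv u) v) < r].

Definition Qdim : R := (2 * n + 2)%:R.

(* Iterated Lebesgue integral over R^k of a function of the coordinates
   (c 0, ..., c (k-1)); by Tonelli this is the integral with respect to
   Lebesgue measure on R^k for non-negative measurable integrands. *)
Fixpoint rint (k : nat) (f : (nat -> R) -> \bar R) : \bar R :=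
  match k with
  | 0 => f (fun _ => 0)
  | k'.+1 => (\int[@lebesgue_measure R]_(r in setT)
               rint k' (fun c => f (fun i => if i == k' then r else c i)))%E
  end.

Definition coords_to_Hn (c : nat -> R) : Hn :=
  (\row_(j < n) c j, \row_(j < n) c (n + j)%N, c (2 * n)%N).

(* Integral over H^n (Haar measure = Lebesgue measure on R^(2n+1)). *)
Definition hint (f : Hn -> \bar R) : \bar R :=
  rint (2 * n).+1 (fun c => f (coords_to_Hn c)).

Definition hint_on (A : set Hn) (f : Hn -> R) : \bar R :=
  hint (fun x => (\1_A x * f x)%:E).

Definition hmeas (A : set Hn) : \bar R := hint_on A (fun _ => 1).

Definition Hlocally_integrable (V : Hn -> R) : Prop :=
  forall u r, 0 < r -> (hint_on (hball u r) V < +oo)%E.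

(* V in RH_s :  ( |B|^{-1} int_B V^s )^{1/s} <= C |B|^{-1} int_B V,
   written as  int_B V^s <= (C |B|^{-1} int_B V)^s |B|. *)
Definition reverse_Holder (s : R) (V : Hn -> R) : Prop :=
  exists2 C : R, 0 < C &
    forall u r, 0 < r ->
      (hint_on (hball u r) (fun x => (V x `^ s)%R) <=
       ((C * (fine (hint_on (hball u r) V) / fine (hmeas (hball u r)))) `^ s
          * fine (hmeas (hball u r)))%R%:E)%E.

Definition crit_radius (V : Hn -> R) (u : Hn) : R :=
  sup [set r : R | 0 < r /\
        (r `^ (2 - Qdim) * fine (hint_on (hball u r) V) <= 1)].

Definition Gammaf (a : R) : R :=
  Rintegral (@lebesgue_measure R) `]0, +oo[%classic
            (fun s => s `^ (a - 1) * expR (- s)).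

Definition Kalpha (P : R -> Hn -> Hn -> R) (alpha : R) (u v : Hn) : R :=
  (Gammaf (alpha / 2))^-1 *
  Rintegral (@lebesgue_measure R) `]0, +oo[%classic
            (fun s => P s u v * s `^ (alpha / 2 - 1)).

Definition decay (rho : Hn -> R) (N : nat) (s : R) (u v : Hn) : R :=
  ((1 + Num.sqrt s / rho u + Num.sqrt s / rho v) ^+ N)^-1.

(* Gaussian upper bound of the heat kernel of L = -Delta + V *)
Definition heat_upper_bound (P : R -> Hn -> Hn -> R) (rho : Hn -> R) (A : R) :=
  forall N : nat, exists2 C : R, 0 < C &
    forall s u v, 0 < s ->
      `|P s u v| <= C * s `^ (- (Qdim / 2))
                     * expR (- (hnorm (hmul (hinv v) u) ^+ 2 / (A * s)))
                     * decay rho N s u v.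

Definition heat_lipschitz (P : R -> Hn -> Hn -> R) (rho : Hn -> R) (A delta : R) :=
  forall N : nat, exists2 C : R, 0 < C &
    forall s u v h, 0 < s -> hnorm h <= hnorm (hmul (hinv v) u) / 2 ->
      `|P s (hmul u h) v - P s u v|
        <= C * (hnorm h / Num.sqrt s) `^ delta * s `^ (- (Qdim / 2))
             * expR (- (hnorm (hmul (hinv v) u) ^+ 2 / (A * s)))
             * decay rho N s u v.

End Heisenberg.

(* Main.v *)
Require Import Defs.
From HB Require Import structures.
From mathcomp Require Import all_boot all_order all_algebra.
From mathcomp Require Import all_classical all_reals all_analysis.
From mathcomp Require Import ring lra measurable_realfun ftc.
Import Order.TTheory GRing.Theory Num.Theory.
Import numFieldNormedType.Exports.
Local Open Scope classical_set_scope.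
Local Open Scope ring_scope.

Section Alg.
Variable R : realType.
Variable n : nat.

Lemma hmul_invK (u v : Hn R n) : hmul u (hmul (hinv u) v) = v.
Proof.
case: u => [[xu yu] tu]; case: v => [[xv yv] tv].
rewrite /hmul /hinv /hx /hy /ht /=.
congr (_, _, _).
- by apply/rowP => j; rewrite !mxE; ring.
- by apply/rowP => j; rewrite !mxE; ring.
have -> : forall a b c d e : R, a + (b + c + 2 * d) + 2 * e = a + b + c + 2 * (d + e) by move=> *; ring.
rewrite -big_split /= big1 ?mulr0 ?addr0; first ring.
by move=> j _; rewrite !mxE; ring.
Qed.

Lemma hnorm_sym (u v : Hn R n) : hnorm (hmul (hinv u) v) = hnorm (hmul (hinv v) u).
Proof.
case: u => [[xu yu] tu]; case: v => [[xv yv] tv].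
rewrite /hnorm /zsq /hmul /hinv /hx /hy /ht /=.
congr (Num.sqrt (Num.sqrt (_ + _))).
- congr (_ ^+ 2); apply: eq_bigr => j _; rewrite !mxE; ring.
set a := (X in X ^+ 2 = _); set b := (X in _ = X ^+ 2).
suff -> : a = - b by rewrite sqrrN.
apply/eqP; rewrite -addr_eq0 /a /b.
rewrite addrACA -mulrDr -big_split /= big1 ?mulr0 ?addr0; first by apply/eqP; ring.
by move=> j _; rewrite !mxE; ring.
Qed.

Lemma hnorm_ge0 (u : Hn R n) : 0 <= hnorm u.
Proof. exact: sqrtr_ge0. Qed.

End Alg.

Lemma crit_ge0 (R : realType) n (V : Hn R n -> R) u : 0 <= crit_radius V u.
Proof.
rewrite /crit_radius.
set E := [set r : R | _].
have [hs|nhs] := pselect (has_sup E); last by rewrite sup_out.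
case: (hs) => -[r Er] _.
apply: le_trans (sup_upper_bound hs Er).
by case: Er => /ltW.
Qed.
Section Key.
Variable R : realType.

Lemma powRE (a x : R) : 0 < a -> a `^ x = expR (x * ln a).
Proof. by move=> a0; rewrite /powR gt_eqF. Qed.

Lemma expR_poly_bound (A x : R) (k : nat) : 0 < A -> 0 < x ->
  x ^+ k.+1 * expR (- (x / A)) <= (A * k.+1%:R) ^+ k.+1.
Proof.
move=> A0 x0.
have k0 : (0 : R) < k.+1%:R by rewrite ltr0n.
have e1 : (x / (A * k.+1%:R)) ^+ k.+1 <= expR (x / A).
  have -> : x / A = k.+1%:R * (x / (A * k.+1%:R)).
    by field; rewrite ?gt_eqF.
  rewrite expRM_natl; apply: lerXn2r.
  - by rewrite nnegrE divr_ge0 ?ltW // mulr_gt0.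
  - by rewrite nnegrE expR_ge0.
  by apply: le_trans (expR_ge1Dx _); rewrite lerDr.
rewrite expRN ler_pdivrMr ?expR_gt0 //.
apply: le_trans (ler_wpM2l _ e1); last by rewrite exprn_ge0 // ltW // mulr_gt0.
have -> : (A * k.+1%:R) ^+ k.+1 * (x / (A * k.+1%:R)) ^+ k.+1 = x ^+ k.+1.
  by rewrite -exprMn; congr (_ ^+ _); field; rewrite ?gt_eqF // mulr_gt0.
by [].
Qed.

Lemma key_bound (b A : R) (M : nat) : b < 0 -> 0 < A ->
  exists2 K : R, 0 < K & forall r s : R, 0 < r -> 0 < s ->
   s `^ (b - 1) * expR (- (r ^+ 2 / (A * s))) * (1 + r / Num.sqrt s) ^+ M
     <= K * (r ^+ 2 + s) `^ (b - 1).
Proof.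
move=> b0 A0.
set k' := (Num.truncn (1 - b) + M)%N.
set m0 := (Num.truncn (1 - b)).+1.
have hm0 : 1 - b <= m0%:R by apply/ltW/real_truncnS_gt/num_real.
have hk : (m0 + M)%N = k'.+1 by rewrite /m0 /k' addSn.
set B := (A * k'.+1%:R) ^+ k'.+1.
have B0 : 0 <= B by rewrite exprn_ge0 // mulr_ge0 ?ltW.
have two0 : (0 : R) < 2 by [].
exists (2 `^ (1 - b) * 2 ^+ M * (B + 1)).
  by rewrite !mulr_gt0 ?powR_gt0 ?exprn_gt0 // ltr_wpDl.
move=> r s r0 s0.
set c := r ^+ 2.
have c0 : 0 < c by rewrite exprn_gt0.
set y := r / Num.sqrt s.
have sq0 : 0 < Num.sqrt s by rewrite sqrtr_gt0.
have y0 : 0 <= y by rewrite divr_ge0 ?ltW.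
have y2 : y ^+ 2 = c / s by rewrite /y expr_div_n sqr_sqrtr // ltW.
have cs0 : 0 < c + s by rewrite addr_gt0.
have e0 : 0 <= expR (- (c / (A * s))) by exact: expR_ge0.
have e1 : expR (- (c / (A * s))) <= 1.
  by rewrite expR_le1 oppr_le0 divr_ge0 // ltW // mulr_gt0.
have ln2c := ln_gt0 (_ : (1:R) < 2).
case: (leP c s) => hcs.
- have y1 : y <= 1.
    have : y ^+ 2 <= 1 by rewrite y2 ler_pdivrMr // mul1r.
    by move=> h; nra.
  have h1 : (1 + y) ^+ M <= 2 ^+ M.
    by apply: lerXn2r; rewrite ?nnegrE //; [lra | lra].
  have h3 : s `^ (b - 1) <= 2 `^ (1 - b) * (c + s) `^ (b - 1).
    rewrite !powRE // -expRD ler_expR.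
    have : ln (c + s) <= ln 2 + ln s.
      by rewrite -lnM ?posrE // ler_ln ?posrE ?mulr_gt0 //; lra.
    by move=> h; nra.
  apply: (le_trans (y := 2 `^ (1 - b) * (c + s) `^ (b - 1) * 1 * 2 ^+ M)).
    apply: ler_pM => //.
    - by rewrite mulr_ge0 ?powR_ge0.
    - by rewrite exprn_ge0 //; lra.
    - by apply: ler_pM; rewrite ?powR_ge0.
  rewrite [X in _ <= X](_ : _ = (2 `^ (1 - b) * (c + s) `^ (b - 1) * 2 ^+ M) * (B + 1)); last by ring.
  rewrite mulr1 -{1}[_ * 2 ^+ M]mulr1 ler_wpM2l ?lerDr //.
  by rewrite !mulr_ge0 ?powR_ge0 ?exprn_ge0.
- set x := c / s.
  have x1 : 1 < x by rewrite /x ltr_pdivlMr // mul1r.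
  have x0 : 0 < x by lra.
  have y1 : 1 <= y by move: y2; rewrite -/x => h; nra.
  have h1 : (1 + y) ^+ M <= (2 * x) ^+ M.
    apply: lerXn2r; rewrite ?nnegrE; [lra | lra |].
    by rewrite /x -y2; nra.
  have lns : ln s = ln c - ln x.
    by rewrite /x ln_div ?posrE //; ring.
  have h3 : s `^ (b - 1) = c `^ (b - 1) * x `^ (1 - b).
    by rewrite !powRE // -expRD lns; congr expR; ring.
  have lx0 : 0 <= ln x by apply: ln_ge0; lra.
  have h4 : x `^ (1 - b) <= x ^+ m0.
    rewrite powRE // -[x in _ <= x ^+ _]lnK ?posrE // -expRM_natl ler_expR.
    exact: ler_wpM2r.
  have h5 : 2 `^ (b - 1) * c `^ (b - 1) <= (c + s) `^ (b - 1).
    rewrite !powRE // -expRD ler_expR.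
    have : ln (c + s) <= ln 2 + ln c.
      by rewrite -lnM ?posrE // ler_ln ?posrE ?mulr_gt0 //; lra.
    by move=> h; nra.
  have h22 : 2 `^ (1 - b) * 2 `^ (b - 1) = 1 :> R.
    by rewrite !powRE // -expRD -expR0; congr expR; ring.
  have hP : 0 <= c `^ (b - 1) by exact: powR_ge0.
  rewrite h3.
  apply: (le_trans (y := c `^ (b - 1) * x ^+ m0 * expR (- (c / (A * s))) * (2 * x) ^+ M)).
    apply: ler_pM => //.
    - by rewrite !mulr_ge0 ?powR_ge0.
    - by rewrite exprn_ge0 //; lra.
    apply: ler_pM => //.
    - by rewrite !mulr_ge0 ?powR_ge0.
    by apply: ler_pM; rewrite ?powR_ge0.
  have hcA : c / (A * s) = x / A by rewrite /x; field; rewrite ?gt_eqF.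
  rewrite hcA.
  rewrite [X in X <= _](_ : _ = c `^ (b - 1) * 2 ^+ M * (x ^+ (m0 + M) * expR (- (x / A)))); last first.
    rewrite exprD [(2 * x) ^+ M]exprMn.
    move: (x ^+ m0) (x ^+ M) (2 ^+ M : R) (expR _) (c `^ _) => ? ? ? ? ?; ring.
  rewrite hk.
  apply: (le_trans (y := c `^ (b - 1) * 2 ^+ M * (B + 1))).
    apply: ler_wpM2l; first by rewrite mulr_ge0 ?exprn_ge0.
    have := @expR_poly_bound A x k' A0 x0; rewrite -/B => h.
    lra.
  apply: le_trans (ler_wpM2l _ h5); last first.
    by rewrite !mulr_ge0 ?powR_ge0 ?exprn_ge0 ?addr_ge0.
  rewrite [X in _ <= X](_ : _ = (2 `^ (1 - b) * 2 `^ (b - 1)) * (c `^ (b - 1) * 2 ^+ M * (B + 1))); last by ring.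
  by rewrite h22 mul1r.
Qed.

End Key.
Section Int.
Variable R : realType.


Lemma shift_powR_derive (c e x : R) : 0 < x + c ->
  is_derive x 1 (fun s => (s + c) `^ e) (e * (x + c) `^ (e - 1)).
Proof.
move=> xc.
have -> : (fun s => (s + c) `^ e) = ((@powR R)^~ e) \o shift c by [].
have df : derivable (shift c) x 1.
  exact: (@ex_derive _ _ _ _ _ _ _ (@is_derive_shift R x 1 c)).
have dg : derivable ((@powR R)^~ e) (shift c x) 1.
  by apply: (@derivable_powR R 1 e); rewrite in_itv /= andbT.
have dcomp : derivable (((@powR R)^~ e) \o shift c) x 1.
  apply/derivable1_diffP; apply: differentiable_comp; exact/derivable1_diffP.
apply: DeriveDef; first exact: dcomp.
rewrite -derive1E (derive1_comp df dg).
rewrite powR_derive1; last by rewrite in_itv /= andbT.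
by rewrite derive1E (@derive_val _ _ _ _ _ _ _ (@is_derive_shift R x 1 c)) mulr1.
Qed.

Lemma measurable_shift_powR (c e : R) (D : set R) :
  measurable_fun D (fun s : R => (s + c) `^ e).
Proof.
apply: measurable_funTS.
apply: (measurableT_comp (@measurable_powR R e)).
exact: measurable_funD.
Qed.

Lemma int_pow (b c : R) : b < 0 -> 0 < c ->
  (@lebesgue_measure R).-integrable `]0, +oo[%classic
      (EFin \o (fun s => (s + c) `^ (b - 1))) /\
  Rintegral (@lebesgue_measure R) `]0, +oo[%classic (fun s => (s + c) `^ (b - 1))
     = c `^ b / (- b).
Proof.
move=> b0 c0.
set h := fun s => (s + c) `^ (b - 1).
set F := fun s => b^-1 * (s + c) `^ b.
have dF : forall x : R, 0 <= x -> is_derive x 1 F (h x).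
  move=> x x0.
  have xc : 0 < x + c by lra.
  have H := shift_powR_derive c b x xc.
  have H2 := @is_deriveZ _ _ _ _ b^-1 x 1 _ H.
  apply: is_derive_eq H2 _.
  by rewrite /h -[_ *: _]/(_ * _) mulrA mulVf ?mul1r // lt_eqF.
have mh : measurable_fun (`]0, +oo[%classic : set R) (EFin \o h).
  by apply/measurable_EFinP; exact: measurable_shift_powR.
have FTC : (\int[@lebesgue_measure R]_(x in (`[0%R, +oo[%classic : set R)) (h x)%:E = 0%:E - (F 0)%:E)%E.
  apply: ge0_continuous_FTC2y.
  - by move=> x _; exact: powR_ge0.
  - apply: derivable_within_continuous => x; rewrite in_itv /= andbT => x0.
    have xc : 0 < x + c by lra.
    exact: (@ex_derive _ _ _ _ _ _ _ (shift_powR_derive c (b - 1) x xc)).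
  - apply/cvgrPdist_le => eps eps0.
    have T0 : 0 < eps * (- b) by rewrite mulr_gt0 // oppr_gt0.
    near=> x.
    have xc : 0 < x + c.
      by apply: (lt_le_trans c0); rewrite lerDr; near: x; apply: nbhs_pinfty_ge; exact: num_real.
    have hx : expR (ln (eps * - b) / b) <= x.
      by near: x; apply: nbhs_pinfty_ge; exact: num_real.
    have x0 : 0 < x := lt_le_trans (expR_gt0 _) hx.
    have hP : (x + c) `^ b <= eps * - b.
      rewrite powRE // -[X in _ <= X]lnK ?posrE // ler_expR.
      have h1 : ln (eps * - b) / b <= ln (x + c).
        rewrite -[X in X <= _]expRK ler_ln ?posrE ?expR_gt0 //; lra.
      have hq : b * (ln (eps * - b) / b) = ln (eps * - b) by field; rewrite lt_eqF.
      move: h1 hq; move: (ln (eps * - b) / b) => q h1 hq; nra.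
    rewrite sub0r normrN /F normrM normfV (ltr0_norm b0) (ger0_norm (powR_ge0 _ _)).
    apply: le_trans (ler_wpM2l _ hP) _; first by rewrite invr_ge0 oppr_ge0 ltW.
    by rewrite mulrCA mulVf ?mulr1 // oppr_eq0 lt_eqF.
  - by move=> x x0; apply: (@ex_derive _ _ _ _ _ _ _ (dF x (ltW x0))).
  - have : {for 0, continuous F}.
      apply: differentiable_continuous; apply/derivable1_diffP.
      exact: (@ex_derive _ _ _ _ _ _ _ (dF 0 (lexx 0))).
    by move=> /cvg_at_right_filter.
  - move=> x; rewrite in_itv /= andbT => x0.
    by rewrite derive1E (@derive_val _ _ _ _ _ _ _ (dF x (ltW x0))).
have E : (\int[@lebesgue_measure R]_(x in (`]0%R, +oo[%classic : set R)) (h x)%:E = (c `^ b / - b)%:E)%E.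
  rewrite integral_itv_obnd_cbnd // FTC /F add0r -EFinN; congr EFin.
  by rewrite add0r invrN mulrN mulrC.
split.
  apply/integrableP; split => //.
  under eq_integral => x _ do rewrite /= ger0_norm ?powR_ge0 //.
  by rewrite E ltry.
by rewrite /Rintegral E.
Unshelve. all: by end_near.
Qed.


End Int.


Lemma decay_le (R : realType) n (rho : Hn R n -> R) (N : nat) (s : R) u w (r : R) :
  0 < s -> 0 <= rho u -> 0 <= rho w -> 0 <= r ->
  decay rho N s u w <= ((1 + r / rho u) ^+ N)^-1 * (1 + r / Num.sqrt s) ^+ N.
Proof.
move=> s0 ru rw r0.
have sq0 : 0 < Num.sqrt s by rewrite sqrtr_gt0.
set a := 1 + Num.sqrt s / rho u + Num.sqrt s / rho w.
set t := 1 + r / rho u.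
set y := 1 + r / Num.sqrt s.
have h1 : 0 <= Num.sqrt s / rho u := divr_ge0 (ltW sq0) ru.
have h2 : 0 <= Num.sqrt s / rho w := divr_ge0 (ltW sq0) rw.
have h3 : 0 <= r / rho u := divr_ge0 r0 ru.
have h4 : 0 <= r / Num.sqrt s := divr_ge0 r0 (ltW sq0).
have a1 : 1 <= a by rewrite /a; lra.
have t1 : 1 <= t by rewrite /t; lra.
have y1 : 1 <= y by rewrite /y; lra.
have key : Num.sqrt s / rho u * (r / Num.sqrt s) = r / rho u.
  transitivity ((Num.sqrt s / Num.sqrt s) * (r / rho u)); first by ring.
  by rewrite divff ?gt_eqF // mul1r.
have hty : t <= a * y.
  rewrite /t /a /y; move: key h1 h2 h3 h4.
  move: (Num.sqrt s / rho u) (Num.sqrt s / rho w) (r / rho u) (r / Num.sqrt s) => p q m k hk *.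
  nra.
have hN : t ^+ N <= a ^+ N * y ^+ N.
  by rewrite -exprMn; apply: lerXn2r; rewrite ?nnegrE //; nra.
have aN : 0 < a ^+ N by rewrite exprn_gt0 //; lra.
have tN : 0 < t ^+ N by rewrite exprn_gt0 //; lra.
rewrite /decay -/a.
rewrite -ler_pdivrMl ?invr_gt0 // invrK mulrC.
by rewrite mulrC ler_pdivrMr // mulrC.
Qed.

Lemma pow_combine (R : realType) (s d delta Q alpha : R) : 0 < s -> 0 < d ->
  (d / Num.sqrt s) `^ delta * s `^ (- (Q / 2)) * s `^ (alpha / 2 - 1)
   = d `^ delta * s `^ ((alpha - Q - delta) / 2 - 1).
Proof.
move=> s0 d0.
have sq0 : 0 < Num.sqrt s by rewrite sqrtr_gt0.
rewrite !powRE ?divr_gt0 //.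
rewrite ln_div ?posrE // -powR12_sqrt ?ltW // ln_powR -!expRD; congr expR.
field. all: by [].
Qed.


Lemma half_pos (R : realType) (x y : R) : 0 < x -> x <= y / 2 -> 0 < y.
Proof. by move=> *; lra. Qed.

Theorem lemma4p2 (R : realType) (n : nat) (V : Hn R n -> R) (sRH alpha delta A : R)
    (P : R -> Hn R n -> Hn R n -> R) :
  (0 < n)%N ->
  (forall x, 0 <= V x) ->
  Hlocally_integrable V ->
  (0 < hint (fun x => (V x)%:E))%E ->
  Qdim R n / 2 <= sRH ->
  reverse_Holder sRH V ->
  0 < alpha -> alpha < Qdim R n ->
  0 < delta -> delta <= 1 ->
  0 < A ->
  (forall u v, measurable_fun (`]0, +oo[%classic : set R) (fun s : R => P s u v)) ->
  heat_upper_bound P (crit_radius V) A ->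
  heat_lipschitz P (crit_radius V) A delta ->
  forall N : nat, exists2 C : R, 0 < C &
    forall u v w : Hn R n,
      hnorm (hmul (hinv v) u) <= hnorm (hmul (hinv w) u) / 2 ->
      `|Kalpha P alpha u w - Kalpha P alpha v w|
        <= C * ((1 + hnorm (hmul (hinv w) u) / crit_radius V u) ^+ N)^-1
             * (hnorm (hmul (hinv v) u) `^ delta
                / hnorm (hmul (hinv w) u) `^ (Qdim R n - alpha + delta)).
Proof.
move=> n0 V0 Vint Vpos hs RH a0 aQ d0 d1 A0 Pm Hub Hlip N.
set rho := crit_radius V.
set I := (`]0, +oo[%classic : set R).
have mI : measurable I by exact: measurable_itv.
have [C0 C0p HC0] := Hub 0%N.
have [C1 C1p HC1] := Hlip N.
set b0 := (alpha - Qdim R n) / 2.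
have b0n : b0 < 0 by rewrite /b0; lra.
set b := (alpha - Qdim R n - delta) / 2.
have bn : b < 0 by rewrite /b; lra.
have [K0 K0p HK0] := @key_bound R b0 A 0 b0n A0.
have [K Kp HK] := @key_bound R b A N bn A0.
set G := `|(Gammaf (alpha / 2))^-1|.
have G0 : 0 <= G by exact: normr_ge0.
exists (G * C1 * K / (- b) + 1).
  apply: ltr_wpDl => //; apply: divr_ge0; last by lra.
  by apply: mulr_ge0; [apply: mulr_ge0 => //; exact: ltW | exact: ltW].
move=> u v w huv.
set r := hnorm (hmul (hinv w) u).
set d := hnorm (hmul (hinv v) u).
have r0 : 0 <= r by exact: hnorm_ge0.
have dd0 : 0 <= d by exact: hnorm_ge0.
have rhou := @crit_ge0 R n V u.
have rhow := @crit_ge0 R n V w.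
set D := ((1 + r / rho u) ^+ N)^-1.
have D0 : 0 <= D.
  rewrite /D invr_ge0.
  apply: exprn_ge0.
  apply: addr_ge0; first exact: ler01.
  exact: divr_ge0 r0 rhou.
set X := d `^ delta / r `^ (Qdim R n - alpha + delta).
have X0 : 0 <= X by rewrite divr_ge0 ?powR_ge0.
set h := hmul (hinv u) v.
have hv : hmul u h = v by exact: hmul_invK.
have hh : hnorm h = d by rewrite /h hnorm_sym.
have Lip : forall s, 0 < s -> `|P s v w - P s u w| <=
    C1 * (d / Num.sqrt s) `^ delta * s `^ (- (Qdim R n / 2))
      * expR (- (r ^+ 2 / (A * s))) * decay rho N s u w.
  move=> s s0; have := HC1 s u w h s0.
  by rewrite hv hh => /(_ huv).
have Cp : 0 < G * C1 * K / (- b) + 1.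
  apply: ltr_wpDl; last exact: ltr01.
  apply: divr_ge0; last by rewrite oppr_ge0; exact: ltW.
  by apply: mulr_ge0; [apply: mulr_ge0 => //; exact: ltW | exact: ltW].
have [dle|dpos] := leP d 0.
  have dz : d = 0 by apply/eqP; rewrite eq_le dle dd0.
  have Eq : forall s, 0 < s -> P s v w = P s u w.
    move=> s s0; apply/eqP; rewrite -subr_eq0 -normr_eq0 eq_le normr_ge0 andbT.
    apply: le_trans (Lip s s0) _.
    by rewrite dz mul0r powR0 ?gt_eqF // mulr0 !mul0r.
  have -> : Kalpha P alpha v w = Kalpha P alpha u w.
    rewrite /Kalpha; congr (_ * _); apply: eq_Rintegral => s.
    by rewrite inE /= in_itv /= andbT => s0; rewrite Eq.
  rewrite subrr normr0; apply: mulr_ge0 => //; apply: mulr_ge0 => //; exact: ltW.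
have rpos : 0 < r := @half_pos R d r dpos huv.
have r2 : 0 < r ^+ 2 by rewrite exprn_gt0.
set mu := @lebesgue_measure R.
have mIL : measurable (I : set (measurableTypeR R)) := mI.
set pw := fun s : R => s `^ (alpha / 2 - 1).
have mpw : measurable_fun I pw.
  exact: (measurable_funTS (@measurable_powR R _)).
set fu := fun s : R => P s u w * pw s.
set fv := fun s : R => P s v w * pw s.
set g := fun s : R => fv s - fu s.
have mfu : measurable_fun I fu by exact: measurable_funM (Pm u w) mpw.
have mfv : measurable_fun I fv by exact: measurable_funM (Pm v w) mpw.
have mg : measurable_fun I g by exact: measurable_funB.
set hb0 := fun s : R => (s + r ^+ 2) `^ (b0 - 1).
set hb := fun s : R => (s + r ^+ 2) `^ (b - 1).
have [ih0 _] := @int_pow R b0 (r ^+ 2) b0n r2.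
have [ih Eh] := @int_pow R b (r ^+ 2) bn r2.
set M1 := C1 * d `^ delta * D * K.
have M10 : 0 <= M1.
  apply: mulr_ge0; last exact: ltW.
  apply: mulr_ge0 => //; apply: mulr_ge0; [exact: ltW | exact: powR_ge0].
have Bu : forall s, I s -> `|fu s| <= C0 * K0 * hb0 s.
  move=> s; rewrite /I /= in_itv /= andbT => s0.
  have pw0 : 0 <= pw s := powR_ge0 _ _.
  have hP := HC0 s u w s0.
  rewrite /decay expr0 invr1 mulr1 -/r in hP.
  have hk := HK0 r s rpos s0.
  rewrite expr0 mulr1 in hk.
  have e : s `^ (- (Qdim R n / 2)) * s `^ (alpha / 2 - 1) = s `^ (b0 - 1).
    by rewrite !powRE // -expRD; congr expR; rewrite /b0; field.
  rewrite /fu normrM (ger0_norm pw0).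
  apply: le_trans (ler_wpM2r pw0 hP) _.
  rewrite /pw.
  rewrite [X in X <= _](_ : _ = C0 * (s `^ (b0 - 1) * expR (- (r ^+ 2 / (A * s))))); last by rewrite -e; ring.
  rewrite /hb0 [s + _]addrC -mulrA ler_pM2l //.
have Bg : forall s, I s -> `|g s| <= M1 * hb s.
  move=> s; rewrite /I /= in_itv /= andbT => s0.
  have pw0 : 0 <= pw s := powR_ge0 _ _.
  have hP := Lip s s0.
  have hd := @decay_le R n rho N s u w r s0 rhou rhow r0.
  have hk := HK r s rpos s0.
  have pc := @pow_combine R s d delta (Qdim R n) alpha s0 dpos.
  rewrite /g /fv /fu.
  rewrite (_ : P s v w * pw s - P s u w * pw s = (P s v w - P s u w) * pw s); last by ring.
  rewrite normrM (ger0_norm pw0).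
  have nn : 0 <= C1 * (d / Num.sqrt s) `^ delta * s `^ (- (Qdim R n / 2))
      * expR (- (r ^+ 2 / (A * s))).
    apply: mulr_ge0; last exact: expR_ge0.
    apply: mulr_ge0; last exact: powR_ge0.
    apply: mulr_ge0; [exact: ltW | exact: powR_ge0].
  apply: le_trans (ler_wpM2r pw0 (le_trans hP (ler_wpM2l nn hd))) _.
  rewrite /pw.
  set E := expR _. set Y := (1 + r / Num.sqrt s) ^+ N.
  rewrite [X in X <= _](_ : _ = C1 * D * Y * E * ((d / Num.sqrt s) `^ delta * s `^ (- (Qdim R n / 2)) * s `^ (alpha / 2 - 1))); last by rewrite -/D; clearbody Y E D; ring.
  rewrite pc.
  rewrite [X in X <= _](_ : _ = (C1 * d `^ delta * D) * (s `^ (b - 1) * E * Y)); last by clearbody Y E D; ring.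
  rewrite /M1 /hb [s + _]addrC.
  rewrite [X in _ <= X](_ : _ = (C1 * d `^ delta * D) * (K * (r ^+ 2 + s) `^ (b - 1))); last by clearbody D; ring.
  have NN : 0 <= C1 * d `^ delta * D.
    apply: mulr_ge0 => //; apply: mulr_ge0; [exact: ltW | exact: powR_ge0].
  exact: (ler_wpM2l NN hk).
have ifu : mu.-integrable I (EFin \o fu).
  have Z := integrableZl mIL (C0 * K0) ih0.
  apply: (le_integrable mIL _ _ Z).
  - exact/measurable_EFinP.
  - move=> s Is; rewrite /= lee_fin.
    exact: le_trans (Bu s Is) (ler_norm _).
have ig : mu.-integrable I (EFin \o g).
  have Z := integrableZl mIL M1 ih.
  apply: (le_integrable mIL _ _ Z).
  - exact/measurable_EFinP.
  - move=> s Is; rewrite /= lee_fin.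
    exact: le_trans (Bg s Is) (ler_norm _).
have ifv : mu.-integrable I (EFin \o fv).
  apply: (eq_integrable mIL ((EFin \o fu) \+ (EFin \o g))); last exact: integrableD.
  by move=> s _; rewrite /= -EFinD /g addrC subrK.
have KE : Kalpha P alpha u w - Kalpha P alpha v w
    = - ((Gammaf (alpha / 2))^-1 * Rintegral mu I g).
  have -> : Rintegral mu I g = Rintegral mu I fv - Rintegral mu I fu.
    exact: (RintegralB mIL ifv ifu).
  rewrite /Kalpha.
  change ((Gammaf (alpha / 2))^-1 * Rintegral mu I fu -
    (Gammaf (alpha / 2))^-1 * Rintegral mu I fv =
    - ((Gammaf (alpha / 2))^-1 * (Rintegral mu I fv - Rintegral mu I fu))).
  by ring.
rewrite KE normrN normrM -/G.
have iabs : mu.-integrable I (EFin \o (fun s => `|g s|)).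
  exact: (integrable_abse ig).
have iM : mu.-integrable I (EFin \o (fun s => M1 * hb s)).
  exact: (integrableZl mIL M1 ih).
apply: le_trans (ler_wpM2l G0 (le_trans (le_normr_Rintegral mIL ig)
   (le_Rintegral mIL iabs iM Bg))) _.
rewrite (RintegralZl M1 mIL ih).
have Ehb : Rintegral mu I hb = (r ^+ 2) `^ b / - b := Eh.
rewrite Ehb.
have rp : (r ^+ 2) `^ b = (r `^ (Qdim R n - alpha + delta))^-1.
  rewrite !powRE ?exprn_gt0 // lnXn // -expRN; congr expR; by rewrite /b mulr2n; field.
rewrite rp.
rewrite [X in X <= _](_ : _ = (G * C1 * K / (- b)) * D * X); last first.
  rewrite /X /M1; clearbody D G; ring.
have h01 : G * C1 * K / (- b) <= G * C1 * K / (- b) + 1 by rewrite lerDl.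
exact: (ler_wpM2r X0 (ler_wpM2r D0 h01)).
Qed.
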